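(* Let $r$ and $k$ be positive integers with $r+k\equiv 1\pmod 2$ and $k\le r$, let $H$ be the complete graph with $V(H)=[r+k]$, and let $\mathbf{E}=(E_0,E_1,E_2)$ be an ordered partition of $E(H)$. If $|E_1|+2|E_2|<\min\left\{3(r+k-1),\ \frac18(r+k+3)(r+k+5)\right\}$, then $H$ has an almost perfect matching which is also a good matching for $\mathbf{E}$.
   Context: $[m]=\{1,\dots,m\}$. An ordered partition $(E_0,E_1,E_2)$ of a set is a triple of pairwise disjoint (possibly empty) sets with that union. A matching $M$ is a good matching for $\mathbf{E}$ if $M\cap E_2=\emptyset$ and $|M\cap E_1|\le1$. An almost perfect matching of $H$ is a matching covering all but exactly one vertex of $H$. *)

(* Defs.v *)
From mathcomp Require Import all_boot.
Set Implicit Arguments. Unset Strict Implicit. Unset Printing Implicit Defensive.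

Definition complete_edges (T : finType) : {set {set T}} :=
  [set e : {set T} | #|e| == 2].

Definition ordered_partition3 (T : finType) (X E0 E1 E2 : {set T}) : Prop :=
  [/\ [disjoint E0 & E1], [disjoint E0 & E2], [disjoint E1 & E2]
    & E0 :|: E1 :|: E2 = X].

Definition is_matching (T : finType) (M : {set {set T}}) : Prop :=
  M \subset complete_edges T /\
  (forall e f, e \in M -> f \in M -> e != f -> [disjoint e & f]).

Definition covered (T : finType) (M : {set {set T}}) : {set T} :=
  \bigcup_(e in M) e.

Definition almost_perfect_matching (T : finType) (M : {set {set T}}) : Prop :=
  is_matching M /\ #|~: covered M| = 1.

Definition good_matching (T : finType) (E0 E1 E2 M : {set {set T}}) : Prop :=
  M :&: E2 = set0 /\ #|M :&: E1| <= 1.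

(* Main.v *)
Require Import Defs.
From mathcomp Require Import all_boot.
From mathcomp Require Import zify.
Set Implicit Arguments. Unset Strict Implicit. Unset Printing Implicit Defensive.

Definition Po (n w : nat) : bool := (w < 3 * (n - 1)) && (8 * w < (n + 3) * (n + 5)).


Lemma ev0_arith m w dx du : 4 <= m -> w + 2 <= m -> dx + du <= w ->
  du <= dx -> 2 * w <= (m - 1) * dx + du -> m <= w - dx - du + 3 -> False.
Proof.
move=> m4 hw hs hud h2 hn.
have hD : dx <= 1 by lia.
by case: dx hD hs hud h2 hn => [|[|]] //= *; lia.
Qed.

Lemma ev1_arith1 m w dx du : 4 <= m -> w + 3 <= 2 * m -> dx + du <= w ->
  du <= dx -> 2 * w <= (m - 1) * dx + du -> 2 * m <= w - dx - du + 6 -> False.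
Proof.
move=> m4 hw hs hud h2 hn.
have hD : dx <= 3 by lia.
by case: dx hD hs hud h2 hn => [|[|[|[|]]]] //= *; lia.
Qed.

Lemma ev1_arith2 m w p q dx dy : 4 <= m -> w + 3 <= 2 * m -> p + q = m - 1 ->
  1 <= p -> 1 <= dy -> dx = p + 2 * q -> dx + dy <= w + 1 ->
  2 * w <= dx + p * dy + q * (w - dx + 2) -> m <= w + 1 - dx - dy + 3 -> False.
Proof.
move=> m4 hw hpq hp hdy hdx hs h2 hn.
have hq : q <= 1 by lia.
have hdy2 : dy <= 2 by lia.
case: q hq hpq hdx h2 hn hs => [|[|]] // hq hpq hdx h2 hn hs.
  by case: dy hdy hdy2 h2 hn hs => [|[|[|]]] //= *; lia.
by case: dy hdy hdy2 h2 hn hs => [|[|[|]]] //= *; lia.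
Qed.


Definition rcond n w a m2 q :=
  [&& Po n w, 2 * n <= w + 4, (0 < a) ==> (n - 1 <= w + 4 - 2 * n) & a <= m2] &&
  [&& m2 <= w + 4 - 2 * n, m2 + q <= w, q <= m2 & ~~ Po (n - 2) (w - m2 - q)].
Definition rconc n w a m2 q :=
  a * (w + 4 - 2 * n) + m2 + (n - a - 1) * q + (m2 - a) * (m2 - q) < 2 * w.

Definition rcheck n := all (fun w => all (fun a => all (fun m2 => all (fun q =>
   rcond n w a m2 q ==> rconc n w a m2 q) (iota 0 m2.+1)) (iota 0 n.+1)) (iota 0 3)) (iota (2 * n - 4) (n + 1)).

Lemma rcheck_small : all rcheck [:: 5; 7; 9; 11; 13; 15; 17; 19; 21; 23].
Proof. by vm_compute. Qed.

Lemma red_small n w a m2 q : 5 <= n -> n <= 23 -> odd n -> a <= 2 -> rcond n w a m2 q -> rconc n w a m2 q.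
Proof.
move=> n5 n23 on a2 hc.
have hn : n \in [:: 5; 7; 9; 11; 13; 15; 17; 19; 21; 23].
  by do 24?[case: n n5 n23 on hc => [//|n] n5 n23 on hc].
case/andP: (hc) => /and4P[hPo _ _ _] /and4P[hm2 _ hq _].
have hw : w \in iota (2 * n - 4) (n + 1).
  rewrite mem_iota /=; move: hPo hc => /andP[h1 _] /andP[/and4P[_ h2 _ _] _]; lia.
have ha : a \in iota 0 3 by rewrite mem_iota /=; lia.
have hm : m2 \in iota 0 n.+1 by rewrite mem_iota /=; move: hPo => /andP[h1 _]; lia.
have hq' : q \in iota 0 m2.+1 by rewrite mem_iota /=; lia.
have := allP rcheck_small n hn.
rewrite /rcheck => /allP H1; have {H1} := H1 w hw.
move=> /allP H1; have {H1} := H1 a ha.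
move=> /allP H1; have {H1} := H1 m2 hm.
move=> /allP H1; have {H1} := H1 q hq'.
by move=> /implyP /(_ hc).
Qed.

Lemma red_large n w a m2 q : 25 <= n -> a <= 2 -> rcond n w a m2 q -> rconc n w a m2 q.
Proof.
move=> n25 a2 /andP[/and4P[/andP[h1 h2] h3 h4 h5] /and4P[h6 h7 h8 /nandP h9]].
rewrite /rconc.
have hs : m2 + q <= 5.
  case: h9 => /negP h9.
    suff: w - m2 - q >= 3 * (n - 2 - 1) by lia.
    by rewrite leqNgt; apply/negP.
  have : 8 * (w - m2 - q) >= (n - 2 + 3) * (n - 2 + 5) by rewrite leqNgt; apply/negP.
  nia.
have hq : q <= 2 by lia.
case: a a2 h4 h5 => [|[|[|]]] // _ h4 h5;
(case: q hq hs h7 h8 h9 => [|[|[|]]] // _ hs h7 h8 h9;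
(case: m2 hs h5 h6 h7 h8 h9 => [|[|[|[|[|[|]]]]]] // hs h5 h6 h7 h8 h9; lia)).
Qed.

Lemma od_arith n w a m2 q p0 p1 dx : 5 <= n -> odd n -> Po n w -> a <= 2 ->
  m2 + q <= w -> ~~ Po (n - 2) (w - m2 - q) -> q <= m2 -> p1 + a <= m2 ->
  1 <= p0 -> p0 + p1 + a + 1 = n -> m2 <= dx -> dx + 2 * n <= w + 4 ->
  (0 < a -> n - 1 <= dx) -> 2 * w <= a * dx + m2 + p1 * m2 + p0 * q -> False.
Proof.
move=> n5 on hPo a2 hs hnP hq hp1 hp0 hn hm2 hdx ha hS.
have hPo' := hPo; move/andP: hPo' => [hw1 hw2].
have hc : rcond n w a m2 q.
  apply/andP; split; apply/and4P; split => //; try lia.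
have hr : rconc n w a m2 q.
  by case: (leqP n 23) => h; [apply: red_small | apply: red_large]; rewrite ?h; lia.
move: hr; rewrite /rconc.
have h1 : a * dx <= a * (w + 4 - 2 * n) by apply: leq_mul => //; lia.
have h2 : p1 * (m2 - q) <= (m2 - a) * (m2 - q) by apply: leq_mul => //; lia.
have h3 : p1 * m2 = p1 * (m2 - q) + p1 * q by rewrite -mulnDr subnK.
have h4 : (n - a - 1) * q = p0 * q + p1 * q by rewrite -mulnDl; congr (_ * _); lia.
lia.
Qed.

Section Main.
Variables (T : finType) (E0 E1 E2 : {set {set T}}).
Hypothesis HP : ordered_partition3 (complete_edges T) E0 E1 E2.

Definition c (e : {set T}) : nat := (e \in E1) + 2 * (e \in E2).
Definition deg (V : {set T}) (x : T) : nat := \sum_(u in V :\ x) c [set x; u].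
Definition S (V : {set T}) : nat := \sum_(v in V) deg V v.
Definition w (V : {set T}) : nat := (S V)./2.

Lemma c_le2 (e : {set T}) : c e <= 2.
Proof.
case: HP => _ _ d12 _; rewrite /c.
by case: (boolP (e \in E1)) => h; [rewrite (disjointFr d12 h) | case: (e \in E2)].
Qed.

Lemma degD1 (V : {set T}) (x u : T) : x \in V -> u \in V -> u != x ->
  deg V u = deg (V :\ x) u + c [set u; x].
Proof.
move=> xV uV ux; rewrite /deg (bigD1 x) /=; last by rewrite !inE eq_sym ux.
rewrite addnC; congr (_ + _); apply: eq_bigl => v; rewrite !inE.
by case: (v != u); case: (v \in V); case: (v != x).
Qed.

Lemma S_split (V : {set T}) (x : T) : x \in V -> S V = 2 * deg V x + S (V :\ x).
Proof.
move=> xV; rewrite /S (bigD1 x) //=.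
have -> : \sum_(i in V | i != x) deg V i = \sum_(i in V :\ x) deg V i.
  by apply: eq_bigl => v; rewrite !inE andbC.
rewrite (eq_bigr (fun v => deg (V :\ x) v + c [set v; x])); last first.
  by move=> v; rewrite !inE => /andP[vx vV]; apply: degD1.
rewrite big_split /=.
have -> : \sum_(i in V :\ x) c [set i; x] = deg V x.
  by apply: eq_bigr => v _; rewrite setUC.
lia.
Qed.

Lemma S_even (V : {set T}) : ~~ odd (S V).
Proof.
move: {2}#|V| (leqnn #|V|) => n; elim: n V => [|n IH] V hV.
  have -> : V = set0 by apply/cards0_eq; lia.
  by rewrite /S big_set0.
case: (set_0Vmem V) => [->|[x xV]]; first by rewrite /S big_set0.
rewrite (S_split xV) oddD mul2n odd_double /=; apply: IH.
by move: hV; rewrite (cardsD1 x V) xV; lia.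
Qed.

Lemma Sw (V : {set T}) : S V = 2 * w V.
Proof. by rewrite /w mul2n even_halfK ?S_even. Qed.

Lemma w_split (V : {set T}) (x : T) : x \in V -> w V = deg V x + w (V :\ x).
Proof. by move=> xV; have := S_split xV; rewrite !Sw; lia. Qed.

Lemma deg_le_w (V : {set T}) (x : T) : x \in V -> deg V x <= w V.
Proof. by move=> xV; rewrite (w_split xV); lia. Qed.

Lemma rest_w (V : {set T}) (x u : T) : x \in V -> u \in V -> u != x ->
  w (V :\ x :\ u) + deg V x + deg V u = w V + c [set x; u].
Proof.
move=> xV uV ux.
have uVx : u \in V :\ x by rewrite !inE ux.
rewrite (w_split xV) (w_split uVx) (degD1 xV uV ux) setUC; lia.
Qed.

Lemma sum_le_card (A : {set T}) (F : T -> nat) K :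
  (forall v, v \in A -> F v <= K) -> \sum_(v in A) F v <= #|A| * K.
Proof. by move=> h; rewrite -sum_nat_const; apply: leq_sum. Qed.

Lemma sum_sub (A X : {set T}) (F : T -> nat) :
  X \subset A -> \sum_(v in X) F v <= \sum_(v in A) F v.
Proof.
move=> XA; rewrite [X in _ <= X](big_setID X) /= (setIidPr XA); lia.
Qed.

Lemma deg_ge_card (V : {set T}) (x : T) (X : {set T}) : X \subset V :\ x ->
  (forall u, u \in X -> 0 < c [set x; u]) -> #|X| <= deg V x.
Proof.
move=> XV h; rewrite /deg -sum1_card.
apply: leq_trans (sum_sub _ XV); exact: leq_sum.
Qed.

Lemma S_le_max (V : {set T}) (u : T) K : u \in V -> (forall v, v \in V -> deg V v <= K) ->
  S V <= deg V u + (#|V| - 1) * K.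
Proof.
move=> uV h; rewrite /S (bigD1 u) //= leq_add2l.
have -> : \sum_(i in V | i != u) deg V i = \sum_(i in V :\ u) deg V i.
  by apply: eq_bigl => v; rewrite !inE andbC.
have -> : #|V| - 1 = #|V :\ u| by rewrite (cardsD1 u V) uV; lia.
by apply: sum_le_card => v; rewrite !inE => /andP[_ /h].
Qed.


Definition gm (V : {set T}) (M : {set {set T}}) (b : nat) : Prop :=
  [/\ forall e, e \in M -> [/\ #|e| = 2, e \subset V & e \notin E2],
      forall e f, e \in M -> f \in M -> e != f -> [disjoint e & f],
      #|V :\: covered M| = odd #|V| &
      #|M :&: E1| <= b].

Lemma gm_small (V : {set T}) : #|V| <= 1 -> gm V set0 0.
Proof.
move=> h; split.
- by move=> e; rewrite inE.
- by move=> e f; rewrite inE.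
- rewrite /covered big_set0 setD0; case: #|V| h => [|[|]] //.
- by rewrite set0I cards0.
Qed.

Lemma gm_mono (V : {set T}) (M : {set {set T}}) b b' : b <= b' -> gm V M b -> gm V M b'.
Proof. by move=> bb [h1 h2 h3 h4]; split => //; apply: leq_trans bb. Qed.

Lemma sub_cov (V : {set T}) (M : {set {set T}}) : (forall e, e \in M -> e \subset V) -> covered M \subset V.
Proof. by move=> h; apply/bigcupsP => e /h. Qed.

Lemma gm_add (V : {set T}) (u v : T) (M : {set {set T}}) b : u \in V -> v \in V -> u != v ->
  c [set u; v] <= 1 -> gm (V :\ u :\ v) M b -> gm V ([set u; v] |: M) (b + c [set u; v]).
Proof.
move=> uV vV uv c1 [h1 h2 h3 h4].
have sub : forall e, e \in M -> e \subset V :\ u :\ v by move=> e /h1 [].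
have nin : forall z e, e \in M -> z \in e -> (z != u) && (z != v).
  move=> z e eM ze; have := subsetP (sub e eM) z ze; rewrite !inE.
  by case/andP => -> /andP[-> _].
have e0M : [set u; v] \notin M.
  apply/negP => e0M; have := @nin u _ e0M; rewrite !inE eqxx /= => /(_ isT).
  by [].
have e0E2 : [set u; v] \notin E2.
  apply/negP => h; move: c1; rewrite /c h; lia.
split.
- move=> e; rewrite in_setU1 => /predU1P [->|eM].
    split => //; first by rewrite cards2 uv.
    by apply/subsetP => z; rewrite !inE => /orP[/eqP->|/eqP->].
  case: (h1 e eM) => -> se ->; split => //.
  by apply: subset_trans se _; apply/subsetP => z; rewrite !inE => /andP[_ /andP[_ ->]].
- have key : forall f, f \in M -> [disjoint [set u; v] & f].
    move=> f fM; rewrite -setI_eq0; apply/eqP/setP => z; rewrite !inE.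
    apply/negP => /andP[/orP[/eqP zu|/eqP zv] zf]; have := @nin z f fM zf.
      by rewrite zu eqxx.
    by rewrite zv eqxx andbF.
  move=> e f; rewrite !in_setU1 => /predU1P [->|eM] /predU1P [->|fM].
  + by rewrite eqxx.
  + by move=> _; apply: key.
  + by move=> _; rewrite disjoint_sym; apply: key.
  + exact: h2.
- rewrite /covered big_setU1 //=.
  have -> : V :\: ([set u; v] :|: \bigcup_(i in M) i) = (V :\ u :\ v) :\: covered M.
    apply/setP => z; rewrite !inE /covered.
    by case: (z == u); case: (z == v); case: (z \in V); case: (z \in \bigcup_(i in M) i).
  rewrite h3 (cardsD1 u V) uV (cardsD1 v (V :\ u)) !inE eq_sym uv vV /=.
  by rewrite negbK add0n.
- rewrite setIUl.
  apply: leq_trans (leq_card_setU _ _) _.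
  rewrite addnC leq_add //.
  case h: ([set u; v] \in E1).
    apply: leq_trans (_ : #|[set [set u; v]]| <= _); first exact/subset_leq_card/subsetIl.
    by rewrite cards1 /c h.
  suff -> : [set [set u; v]] :&: E1 = set0 by rewrite cards0.
  by apply/setP => z; rewrite !inE; case: eqP => // ->; rewrite h.
Qed.

Lemma gm_unc (V : {set T}) (x : T) (M : {set {set T}}) b : x \in V -> ~~ odd #|V :\ x| ->
  gm (V :\ x) M b -> gm V M b.
Proof.
move=> xV ev [h1 h2 h3 h4].
have sub : forall e, e \in M -> e \subset V :\ x by move=> e /h1 [].
split => //.
- move=> e eM; case: (h1 e eM) => -> se ->; split => //.
  by apply: subset_trans se _; apply/subsetP => z; rewrite !inE => /andP[_ ->].
- have xC : x \notin covered M.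
    by apply/negP => /(subsetP (sub_cov sub)); rewrite !inE eqxx.
  rewrite (cardsD1 x) !inE xC xV /=.
  have -> : (V :\: covered M) :\ x = (V :\ x) :\: covered M.
    by apply/setP => z; rewrite !inE; case: (z == x); case: (z \in V); case: (z \in covered M).
  by rewrite h3 (negbTE ev) (cardsD1 x V) xV /= (negbTE ev).
Qed.


Lemma S_D1 (V : {set T}) (x : T) : x \in V -> S V = deg V x + \sum_(v in V :\ x) deg V v.
Proof.
move=> xV; rewrite /S (bigD1 x) //=; congr (_ + _).
by apply: eq_bigl => v; rewrite !inE andbC.
Qed.

Lemma card_D2 (V : {set T}) (x u : T) : x \in V -> u \in V :\ x ->
  #|V :\ x :\ u| + 2 = #|V|.
Proof. by move=> xV uV; rewrite (cardsD1 x V) xV (cardsD1 u (V :\ x)) uV; lia. Qed.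

Lemma pick_max (V : {set T}) : 0 < #|V| ->
  exists2 x, x \in V & forall v, v \in V -> deg V v <= deg V x.
Proof.
rewrite card_gt0 => /set0Pn [x0 x0V].
case: (arg_maxnP (deg V) x0V) => x xV xmax; exists x => //.
Qed.

Lemma pick_max_in (V X : {set T}) : 0 < #|X| ->
  exists2 x, x \in X & forall v, v \in X -> deg V v <= deg V x.
Proof.
rewrite card_gt0 => /set0Pn [x0 x0V].
case: (arg_maxnP (deg V) x0V) => x xV xmax; exists x => //.
Qed.

Lemma E0_nbr (V : {set T}) (x : T) :
  (exists2 u, u \in V :\ x & c [set x; u] = 0) \/
  (forall u, u \in V :\ x -> 0 < c [set x; u]).
Proof.
case: (boolP [exists u in V :\ x, c [set x; u] == 0]).
  by move=> /existsP [u /andP[h /eqP h']]; left; exists u.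
move=> /existsPn hall; right => u uV; have := hall u; rewrite uV /=; lia.
Qed.

Lemma Ev0 (V : {set T}) : ~~ odd #|V| -> (#|V| = 0 \/ w V + 2 <= #|V|) ->
  exists M, gm V M 0.
Proof.
move: {2}#|V| (leqnn #|V|) => n; elim: n V => [|n IH] V hV ev hw.
  by exists set0; apply: gm_small; lia.
case: (posnP #|V|) => [V0|Vpos]; first by exists set0; apply: gm_small; lia.
have {}hw : w V + 2 <= #|V| by case: hw => //; lia.
have [x xV xmax] := pick_max Vpos.
case: (E0_nbr V x) => [[u uVx cu]|hall]; last first.
  have h1 := deg_ge_card (subxx _) hall; have h2 := deg_le_w xV.
  by move: hw; rewrite (cardsD1 x V) xV; lia.
have uV : u \in V by move: uVx; rewrite !inE => /andP[].
have ux : u != x by move: uVx; rewrite !inE => /andP[].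
have hR := rest_w xV uV ux; rewrite cu in hR.
have cR := card_D2 xV uVx.
have [M hM] : exists M, gm (V :\ x :\ u) M 0.
  apply: IH; [clear -hV cR; lia | by move: ev; rewrite -cR addn2 /= negbK |].
  case: (leqP #|V| 3) => hm; first by left; clear -hm cR Vpos ev; lia.
  right; have := S_le_max uV xmax; rewrite Sw => hS.
  have := xmax u uV => hux.
  case: (leqP (w (V :\ x :\ u) + 2) #|V :\ x :\ u|) => // hc; exfalso.
  apply: (@ev0_arith #|V| (w V) (deg V x) (deg V u)); clear -hw hm hR hux hS hc cR; lia.
exists ([set x; u] |: M); have := gm_add xV uV (negbT _) _ hM.
by rewrite cu; apply => //; apply/negbTE; rewrite eq_sym.
Qed.


Lemma Ev1 (V : {set T}) : ~~ odd #|V| -> (#|V| = 0 \/ w V + 3 <= 2 * #|V|) ->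
  exists M, gm V M 1.
Proof.
move: {2}#|V| (leqnn #|V|) => n; elim: n V => [|n IH] V hV ev hw.
  by exists set0; apply: gm_mono (gm_small _); lia.
case: (posnP #|V|) => [V0|Vpos]; first by exists set0; apply: gm_mono (gm_small _); lia.
have {}hw : w V + 3 <= 2 * #|V| by case: hw => //; lia.
have V2 : 2 <= #|V| by move: ev Vpos; case: #|V| => [|[|]].
have [x xV xmax] := pick_max Vpos.
case: (E0_nbr V x) => [[u uVx cu]|hall].
  have uV : u \in V by move: uVx; rewrite !inE => /andP[].
  have ux : u != x by move: uVx; rewrite !inE => /andP[].
  have hR := rest_w xV uV ux; rewrite cu in hR.
  have cR := card_D2 xV uVx.
  have [M hM] : exists M, gm (V :\ x :\ u) M 1.
    apply: IH; [clear -hV cR; lia | by move: ev; rewrite -cR addn2 /= negbK |].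
    case: (leqP #|V| 3) => hm; first by left; clear -hm cR V2 ev; lia.
    right; have := S_le_max uV xmax; rewrite Sw => hS.
    have := xmax u uV => hux.
    case: (leqP (w (V :\ x :\ u) + 3) (2 * #|V :\ x :\ u|)) => // hc; exfalso.
    apply: (@ev1_arith1 #|V| (w V) (deg V x) (deg V u)); clear -hw hm hR hux hS hc cR; lia.
  exists ([set x; u] |: M); have := gm_add xV uV (negbT _) _ hM.
  by rewrite cu addn0; apply => //; apply/negbTE; rewrite eq_sym.
set P := [set u in V :\ x | c [set x; u] == 1].
set Q := [set u in V :\ x | c [set x; u] != 1].
have PQ : #|P| + #|Q| = #|V| - 1.
  have := cardsID P (V :\ x).
  have -> : (V :\ x) :&: P = P by apply/setIidPr/subsetP => u; rewrite inE => /andP[].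
  have -> : (V :\ x) :\: P = Q.
    by apply/setP => u; rewrite !inE; case: (u \in V); case: (u == x); case: (c [set x; u] == 1).
  by rewrite (cardsD1 x V) xV; lia.
have Q2 : forall u, u \in Q -> c [set x; u] = 2.
  move=> u; rewrite inE => /andP[/hall h1 h2]; have := c_le2 [set x; u]; clear -h1 h2; lia.
have sumPQ : forall F : T -> nat,
    \sum_(v in V :\ x) F v = \sum_(v in P) F v + \sum_(v in Q) F v.
  move=> F; rewrite (big_setID P) /=; congr (_ + _); apply: eq_bigl => u; rewrite !inE.
    by case: (u \in V); case: (u == x); case: (c [set x; u] == 1).
  by case: (u \in V); case: (u == x); case: (c [set x; u] == 1).
have dxE : deg V x = #|P| + 2 * #|Q|.
  have h1 : \sum_(v in P) c [set x; v] = #|P|.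
    by rewrite -sum1_card; apply: eq_bigr => u; rewrite inE => /andP[_ /eqP].
  have h2 : \sum_(v in Q) c [set x; v] = 2 * #|Q|.
    by rewrite mulnC -sum_nat_const; apply: eq_bigr => u uQ; apply: Q2.
  by rewrite /deg sumPQ h1 h2.
have dxw := deg_le_w xV.
have Ppos : 0 < #|P| by move: PQ dxE dxw hw V2; clear; lia.
have [y yP ymax] := pick_max_in V Ppos.
have yVx : y \in V :\ x by move: yP; rewrite inE => /andP[].
have cxy : c [set x; y] = 1 by move: yP; rewrite inE => /andP[_ /eqP].
have yV : y \in V by move: yVx; rewrite !inE => /andP[].
have yx : y != x by move: yVx; rewrite !inE => /andP[].
have hR := rest_w xV yV yx; rewrite cxy in hR.
have cR := card_D2 xV yVx.
have dy1 : 1 <= deg V y.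
  by rewrite (degD1 xV yV yx) setUC cxy; clear; lia.
have [M hM] : exists M, gm (V :\ x :\ y) M 0.
  apply: Ev0; first by move: ev; rewrite -cR addn2 /= negbK.
  case: (leqP #|V| 3) => hm; first by left; clear -hm cR V2 ev; lia.
  right.
  have hS : 2 * w V <= deg V x + #|P| * deg V y + #|Q| * (w V - deg V x + 2).
    rewrite -Sw (S_D1 xV) sumPQ -addnA leq_add2l leq_add //.
      exact: sum_le_card.
    apply: sum_le_card => v vQ.
    have vVx : v \in V :\ x by move: vQ; rewrite inE => /andP[].
    have vV : v \in V by move: vVx; rewrite !inE => /andP[].
    have vx : v != x by move: vVx; rewrite !inE => /andP[].
    rewrite (degD1 xV vV vx); have := deg_le_w vVx; have := w_split xV.
    have := c_le2 [set v; x]; clear; lia.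
  case: (leqP (w (V :\ x :\ y) + 2) #|V :\ x :\ y|) => // hc; exfalso.
  apply: (@ev1_arith2 #|V| (w V) #|P| #|Q| (deg V x) (deg V y)); clear -hw hm PQ Ppos dy1 dxE hR hS hc cR; lia.
exists ([set x; y] |: M); have := gm_add xV yV (negbT _) _ hM.
by rewrite cxy; apply => //; apply/negbTE; rewrite eq_sym.
Qed.


Lemma setD1C (A : {set T}) (a b : T) : A :\ a :\ b = A :\ b :\ a.
Proof. by apply/setP => z; rewrite !inE; case: (z == a); case: (z == b). Qed.

Lemma tri_arith n w wR s : 3 <= n -> odd n -> Po n w -> 3 * (n - 3) + s + wR <= w ->
  3 <= s -> n - 3 = 0 \/ wR + 2 <= n - 3.
Proof.
move=> h3 on /andP[h1 h2] hw hs.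
case: (leqP 7 n) => h7; first by right; lia.
have : n = 3 \/ n = 5.
  by clear -h3 h7 on; move: n h3 h7 on => [|[|[|[|[|[|[|]]]]]]] //; auto.
by case=> ?; subst n; lia.
Qed.

Lemma tri_finish (V : {set T}) (x y z : T) (M : {set {set T}}) :
  x \in V -> y \in V :\ x -> z \in V :\ x :\ y -> c [set x; y] = 1 -> odd #|V| ->
  gm (V :\ x :\ y :\ z) M 0 -> exists M, gm V M 1.
Proof.
move=> xV yVx zV cxy on hM.
have yV : y \in V by move: yVx; rewrite !inE => /andP[].
have yx : y != x by move: yVx; rewrite !inE => /andP[].
have cR := card_D2 xV yVx.
have hM' : gm (V :\ x :\ y) M 0.
  refine (gm_unc zV _ hM).
  by move: on; rewrite -cR (cardsD1 z (V :\ x :\ y)) zV addn2 /= negbK.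
exists ([set x; y] |: M); have := gm_add xV yV (negbT _) _ hM'.
by rewrite cxy; apply => //; apply/negbTE; rewrite eq_sym.
Qed.

Lemma triple (V : {set T}) (x y z : T) :
  x \in V -> y \in V :\ x -> z \in V :\ x :\ y ->
  (forall u, u \in V :\ x -> 0 < c [set x; u]) ->
  (forall u, u \in V :\ y -> 0 < c [set y; u]) ->
  (forall u, u \in V :\ z -> 0 < c [set z; u]) ->
  odd #|V| -> Po #|V| (w V) -> exists M, gm V M 1.
Proof.
move=> xV yVx zVxy hx hy hz on hPo.
have yV : y \in V by move: yVx; rewrite !inE => /andP[].
have yx : y != x by move: yVx; rewrite !inE => /andP[].
have zV : z \in V by move: zVxy; rewrite !inE => /and3P[].
have zx : z != x by move: zVxy; rewrite !inE => /and3P[].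
have zy : z != y by move: zVxy; rewrite !inE => /and3P[].
have cR := card_D2 xV yVx.
have cR3 : #|V :\ x :\ y :\ z| + 3 = #|V|.
  by rewrite -cR (cardsD1 z (V :\ x :\ y)) zVxy; clear; lia.
have e1 := w_split xV.
have e2 := w_split yVx.
have e3 := w_split zVxy.
have d1 : deg V x = deg (V :\ y :\ z) x + c [set x; z] + c [set x; y].
  have zVy : z \in V :\ y by rewrite !inE zy zV.
  have xVy : x \in V :\ y by rewrite !inE eq_sym yx xV.
  by rewrite (degD1 yV xV (negbT _)) ?(degD1 zVy xVy (negbT _)) //;
     apply/negbTE; rewrite eq_sym.
have d2 : deg (V :\ x) y = deg (V :\ x :\ z) y + c [set y; z].
  have zVx : z \in V :\ x by rewrite !inE zx zV.
  by rewrite (degD1 zVx yVx) // eq_sym.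
have b1 : #|V| - 3 <= deg (V :\ y :\ z) x.
  have -> : #|V| - 3 = #|V :\ y :\ z :\ x|.
    have -> : V :\ y :\ z :\ x = (V :\ x :\ y :\ z).
      by apply/setP => t; rewrite !inE; case: (t == x); case: (t == y); case: (t == z).
    by clear -cR3; lia.
  apply: deg_ge_card (subxx _) _ => u; rewrite !inE => /and4P[ux uz uy uV].
  by apply: hx; rewrite !inE ux uV.
have b2 : #|V| - 3 <= deg (V :\ x :\ z) y.
  have -> : #|V| - 3 = #|V :\ x :\ z :\ y|.
    have -> : V :\ x :\ z :\ y = (V :\ x :\ y :\ z).
      by apply/setP => t; rewrite !inE; case: (t == x); case: (t == y); case: (t == z).
    by clear -cR3; lia.
  apply: deg_ge_card (subxx _) _ => u; rewrite !inE => /and4P[uy uz ux uV].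
  by apply: hy; rewrite !inE uy uV.
have b3 : #|V| - 3 <= deg (V :\ x :\ y) z.
  have -> : #|V| - 3 = #|V :\ x :\ y :\ z| by clear -cR3; lia.
  apply: deg_ge_card (subxx _) _ => u; rewrite !inE => /and4P[uz uy ux uV].
  by apply: hz; rewrite !inE uz uV.
have cxy : 0 < c [set x; y] by apply: hx; rewrite !inE yx yV.
have cxz : 0 < c [set x; z] by apply: hx; rewrite !inE zx zV.
have cyz : 0 < c [set y; z] by apply: hy; rewrite !inE zy zV.
have hw : 3 * (#|V| - 3) + (c [set x; y] + c [set x; z] + c [set y; z]) + w (V :\ x :\ y :\ z) <= w V.
  clear -e1 e2 e3 d1 d2 b1 b2 b3; lia.
have n3 : 3 <= #|V| by clear -cR3; lia.
have hR := tri_arith n3 on hPo hw ltac:(clear -cxy cxz cyz; lia).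
have [M hM] : exists M, gm (V :\ x :\ y :\ z) M 0.
  apply: Ev0; last by case: hR => h; [left|right]; clear -h cR3; lia.
  by move: on; rewrite -cR3 oddD /=; case: (odd _).
have := c_le2 [set x; y]; have := c_le2 [set x; z]; have := c_le2 [set y; z].
move: hPo => /andP[hP1 hP2] l1 l2 l3.
case: (eqVneq (c [set x; y]) 1) => [exy|nxy].
  exact: tri_finish xV yVx zVxy exy on hM.
case: (eqVneq (c [set x; z]) 1) => [exz|nxz].
  have zVx : z \in V :\ x by rewrite !inE zx zV.
  have yVxz : y \in V :\ x :\ z by rewrite !inE yx yV eq_sym zy.
  have hM' : gm (V :\ x :\ z :\ y) M 0 by rewrite (setD1C (V :\ x) z y).
  exact: tri_finish xV zVx yVxz exz on hM'.
case: (eqVneq (c [set y; z]) 1) => [eyz|nyz].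
  have zVy : z \in V :\ y by rewrite !inE zy zV.
  have xVyz : x \in V :\ y :\ z by rewrite !inE eq_sym zx eq_sym yx xV.
  have hM' : gm (V :\ y :\ z :\ x) M 0.
    have -> : V :\ y :\ z :\ x = V :\ x :\ y :\ z; last by [].
    by apply/setP => t; rewrite !inE; case: (t == x); case: (t == y); case: (t == z).
  exact: tri_finish yV zVy xVyz eyz on hM'.
exfalso; clear -hw hP1 l1 l2 l3 nxy nxz nyz cxy cxz cyz; lia.
Qed.

Lemma sum_D1 (B : {set T}) (y : T) (F : T -> nat) : y \in B ->
  \sum_(v in B) F v = F y + \sum_(v in B :\ y) F v.
Proof.
move=> yB; rewrite (bigD1 y) //=; congr (_ + _).
by apply: eq_bigl => v; rewrite !inE andbC.
Qed.

Lemma sum_split (A X : {set T}) (F : T -> nat) : X \subset A ->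
  \sum_(v in A) F v = \sum_(v in X) F v + \sum_(v in A :\: X) F v.
Proof. by move=> XA; rewrite (big_setID X) /= (setIidPr XA). Qed.

Lemma Od1 (V : {set T}) : odd #|V| -> (#|V| = 1 \/ Po #|V| (w V)) ->
  exists M, gm V M 1.
Proof.
move: {2}#|V| (leqnn #|V|) => n; elim: n V => [|n IH] V hV on hw.
  by move: on; have -> : #|V| = 0 by lia.
case: (leqP #|V| 1) => V1; first by exists set0; apply: gm_mono (gm_small _); lia.
have {}hw : Po #|V| (w V) by case: hw => //; lia.
have V3 : 3 <= #|V| by move: on V1; case: #|V| => [|[|[|]]].
have [x xV xmax] := pick_max (ltnW V1).
have cVx : #|V :\ x| + 1 = #|V| by rewrite (cardsD1 x V) xV; lia.
have evx : ~~ odd #|V :\ x| by move: on; rewrite -cVx addn1 /=.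
case: (leqP (w (V :\ x) + 3) (2 * #|V :\ x|)) => hA.
  have [M hM] := Ev1 evx (or_intror hA).
  by exists M; apply: gm_unc xV evx hM.
have hdx : deg V x + 2 * #|V| <= w V + 4 by have := w_split xV; lia.
pose A := [set v in V | [forall u in V :\ v, c [set v; u] != 0]].
have Ain : forall v, v \in A -> forall u, u \in V :\ v -> 0 < c [set v; u].
  move=> v; rewrite inE => /andP[_ /forallP h] u uV; have := h u; rewrite uV /=; lia.
have AV : A \subset V by apply/subsetP => v; rewrite inE => /andP[].
have Aout : forall v, v \in V -> v \notin A -> exists2 u, u \in V :\ v & c [set v; u] = 0.
  move=> v vV vA; have [//|hall] := E0_nbr V v; exfalso.
  move: vA; rewrite inE vV /=; move/negP; apply; apply/forallP => u.
  by apply/implyP => /hall; rewrite lt0n.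
clearbody A.
case: (leqP 3 #|A|) => hA3.
  have [a1 a1A] : exists a1, a1 \in A by apply/set0Pn; rewrite -card_gt0; lia.
  have [a2 a2A] : exists a2, a2 \in A :\ a1.
    by apply/set0Pn; rewrite -card_gt0; move: hA3; rewrite (cardsD1 a1 A) a1A; lia.
  have [a3 a3A] : exists a3, a3 \in A :\ a1 :\ a2.
    apply/set0Pn; rewrite -card_gt0; move: hA3.
    by rewrite (cardsD1 a1 A) a1A (cardsD1 a2 (A :\ a1)) a2A; lia.
  have a2A' : a2 \in A by move: a2A; rewrite !inE => /andP[].
  have a3A' : a3 \in A by move: a3A; rewrite !inE => /and3P[].
  apply: (@triple V a1 a2 a3) => //.
  - exact: (subsetP AV).
  - by move: a2A; rewrite !inE (subsetP AV _ a2A') andbT => /andP[].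
  - by move: a3A; rewrite !inE (subsetP AV _ a3A') andbT => /and3P[-> ->].
  - exact: Ain.
  - exact: Ain.
  - exact: Ain.
set B := V :\: A.
have cB : #|B| + #|A| = #|V| by rewrite /B -(cardsID A V) (setIidPr AV); lia.
have Bpos : 0 < #|B| by lia.
have [y yB ymax] := pick_max_in V Bpos.
have yV : y \in V by move: yB; rewrite inE => /andP[].
have yA : y \notin A by move: yB; rewrite inE => /andP[].
have [u0 u0V cu0] := Aout y yV yA.
set Z := [set u in V :\ y | c [set y; u] == 0].
have Zpos : 0 < #|Z| by rewrite card_gt0; apply/set0Pn; exists u0; rewrite inE u0V cu0 eqxx.
have [u uZ umax] := pick_max_in V Zpos.
have uVy : u \in V :\ y by move: uZ; rewrite inE => /andP[].
have cyu : c [set y; u] = 0 by move: uZ; rewrite inE => /andP[_ /eqP].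
have uV : u \in V by move: uVy; rewrite !inE => /andP[].
have uy : u != y by move: uVy; rewrite !inE => /andP[].
have uA : u \notin A.
  apply/negP => /Ain /(_ y); rewrite setUC cyu !inE eq_sym uy yV /=; by move/(_ isT).
have uB : u \in B by rewrite inE uA uV.
have hR := rest_w yV uV uy; rewrite cyu in hR.
have cR := card_D2 yV uVy.
case: (boolP ((#|V| == 3) || Po (#|V| - 2) (w (V :\ y :\ u)))) => hB.
  have [M hM] : exists M, gm (V :\ y :\ u) M 1.
    apply: IH; [clear -hV cR; lia | by move: on; rewrite -cR addn2 /= negbK |].
    case/orP: hB => [/eqP h|h]; first by left; clear -h cR; lia.
    by right; have -> : #|V :\ y :\ u| = #|V| - 2 by clear -cR; lia.
  exists ([set y; u] |: M); have := gm_add yV uV (negbT _) _ hM.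
  by rewrite cyu addn0; apply => //; apply/negbTE; rewrite eq_sym.
exfalso.
move: hB; rewrite negb_or => /andP[/eqP n3 hB].
set B1 := [set v in B :\ y | c [set y; v] != 0].
set B0 := [set v in B :\ y | c [set y; v] == 0].
have B1sub : B1 \subset B :\ y by apply/subsetP => v; rewrite inE => /andP[].
have B0eq : (B :\ y) :\: B1 = B0.
  by apply/setP => v; rewrite !inE; case: (v == y); case: (v \in V) => //=;
  case: (v \in A); case: (c [set y; v] == 0).
have cB01 : #|B0| + #|B1| + 1 = #|B|.
  rewrite (cardsD1 y B) yB -B0eq.
  have := cardsID B1 (B :\ y); rewrite (setIidPr B1sub); clear; lia.
have uB0 : u \in B0 by rewrite /B0 in_set in_setD1 uy uB cyu eqxx.
have p0pos : 1 <= #|B0| by rewrite card_gt0; apply/set0Pn; exists u.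
have hp1 : #|B1| + #|A| <= deg V y.
  have dis : [disjoint A & B1].
    rewrite -setI_eq0; apply/eqP/setP => v; rewrite !inE.
    by case: (v \in A); rewrite ?andbF.
  have := cardsU A B1; rewrite (_ : A :&: B1 = set0); last by apply/eqP; rewrite setI_eq0.
  rewrite cards0 subn0 addnC => <-.
  apply: deg_ge_card.
    apply/subsetP => v; rewrite !inE => /orP[vA|].
      rewrite (subsetP AV v vA) andbT; apply/negP => /eqP vy.
      by move: yA; rewrite -vy vA.
    by case/andP => /and3P[-> _ ->].
  move=> v; rewrite !inE => /orP[vA|].
    rewrite setUC; apply: (Ain v vA); rewrite !inE yV andbT.
    by apply/negP => /eqP yv; move: yA; rewrite yv vA.
  by case/andP => _; rewrite lt0n.
have ha : 0 < #|A| -> #|V| - 1 <= deg V x.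
  rewrite card_gt0 => /set0Pn [v vA].
  have := deg_ge_card (subxx (V :\ v)) (Ain v vA).
  have := xmax v (subsetP AV v vA).
  by rewrite (cardsD1 v V) (subsetP AV v vA); clear; lia.
have hS : 2 * w V <= #|A| * deg V x + deg V y + #|B1| * deg V y + #|B0| * deg V u.
  rewrite -Sw /S (sum_split _ AV) -!addnA leq_add //.
    by apply: sum_le_card => v /(subsetP AV) /xmax.
  rewrite -/B (sum_D1 _ yB) leq_add2l (sum_split _ B1sub) B0eq leq_add //.
    apply: sum_le_card => v; rewrite inE => /andP[vB _]; apply: ymax.
    by move: vB; rewrite !inE => /andP[].
  apply: sum_le_card => v; rewrite !inE => /andP[/and3P[vy vA vV] cv]; apply: umax.
  by rewrite !inE vy vV cv.
have n5 : 5 <= #|V|.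
  clear -V3 n3 on; move: (#|V|) V3 n3 on => k.
  by do 5?[case: k => [|k] //].
have ha2 : #|A| <= 2 by clear -hA3; lia.
have hmq : deg V y + deg V u <= w V by clear -hR; lia.
have hnP : ~~ Po (#|V| - 2) (w V - deg V y - deg V u).
  by have -> : w V - deg V y - deg V u = w (V :\ y :\ u) by clear -hR; lia.
have hqm : deg V u <= deg V y by apply: ymax.
have hsum : #|B0| + #|B1| + #|A| + 1 = #|V| by clear -cB01 cB; lia.
have hmx : deg V y <= deg V x by apply: xmax.
exact: (@od_arith #|V| (w V) #|A| (deg V y) (deg V u) #|B0| #|B1| (deg V x)
   n5 on hw ha2 hmq hnP hqm hp1 p0pos hsum hmx hdx ha hS).
Qed.

Lemma pairs_card (e : {set T}) : #|e| = 2 ->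
  #|[pred p : T * T | (p.1 \in [set: T]) && (p.2 \in [set: T] :\ p.1) &&
      ([set p.1; p.2] == e)]| = 2.
Proof.
move=> /eqP /cards2P [a [b [ab ->]]].
have -> : 2 = #|[set (a, b); (b, a)]| by rewrite cards2 xpair_eqE (negbTE ab).
apply: eq_card => -[v u]; rewrite !inE /=.
apply/idP/idP.
  move=> /andP[uv /eqP E].
  have va : v \in [set a; b] by rewrite -E !inE eqxx.
  have ua : u \in [set a; b] by rewrite -E !inE eqxx orbT.
  move: uv va ua; rewrite !inE andbT => uv /orP[/eqP ev|/eqP ev] /orP[/eqP eu|/eqP eu];
    by move: uv; rewrite ev eu ?eqxx ?orbT.
move=> /orP[/eqP[-> ->]|/eqP[-> ->]].
  by rewrite eq_sym ab eqxx.
by rewrite ab setUC eqxx.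
Qed.

Lemma sum_indic (X Y : {set {set T}}) : Y \subset X ->
  \sum_(e in X) (e \in Y : nat) = #|Y|.
Proof.
move=> YX; rewrite (big_setID Y) /= (setIidPr YX) -sum1_card.
rewrite [Z in _ + Z]big1 ?addn0; last by move=> e; rewrite !inE => /andP[/negbTE ->].
by apply: eq_bigr => e ->.
Qed.

Lemma w_total : w [set: T] = #|E1| + 2 * #|E2|.
Proof.
suff : S [set: T] = 2 * (#|E1| + 2 * #|E2|) by rewrite Sw; lia.
rewrite /S /deg pair_big_dep /=.
rewrite (partition_big (fun p : T * T => [set p.1; p.2]) (mem (complete_edges T))) /=;
  last first.
  move=> [v u]; rewrite !inE /= andbT => uv.
  by rewrite cards2 (eq_sym v u) uv.
rewrite (eq_bigr (fun e => 2 * c e)); last first.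
  move=> e; rewrite inE => /eqP e2.
  rewrite (eq_bigr (fun _ => c e)); last by move=> p /andP[_ /eqP ->].
  by rewrite sum_nat_const pairs_card // mulnC.
case: HP => _ _ _ hU.
have s1 : E1 \subset complete_edges T by rewrite -hU -setUA subsetU // subsetUl orbT.
have s2 : E2 \subset complete_edges T by rewrite -hU subsetUr.
rewrite -(sum_indic s1) -(sum_indic s2) /c.
rewrite [X in _ + X]big_distrr -big_split big_distrr /=.
by [].
Qed.

End Main.

Theorem lemma14 (r k : nat) (E0 E1 E2 : {set {set 'I_(r + k)}}) :
  0 < r -> 0 < k -> odd (r + k) -> k <= r ->
  ordered_partition3 (complete_edges 'I_(r + k)) E0 E1 E2 ->
  #|E1| + 2 * #|E2| < 3 * (r + k - 1) ->
  8 * (#|E1| + 2 * #|E2|) < (r + k + 3) * (r + k + 5) ->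
  exists M : {set {set 'I_(r + k)}},
    almost_perfect_matching M /\ good_matching E0 E1 E2 M.
Proof.
move=> r0 k0 on kr HP h1 h2.
have cT : #|[set: 'I_(r + k)]| = r + k by rewrite cardsT card_ord.
have [M [g1 g2 g3 g4]] : exists M, gm E1 E2 [set: 'I_(r + k)] M 1.
  apply: (Od1 HP); first by rewrite cT.
  by right; rewrite cT (w_total HP); apply/andP; split.
exists M; split; first split.
- split.
    by apply/subsetP => e eM; rewrite inE; case: (g1 e eM) => -> _ _.
  exact: g2.
- by rewrite -setTD g3 cT on.
- split => //.
  apply/setP => e; rewrite !inE; case eM: (e \in M) => //=.
  by case: (g1 e eM) => _ _ /negbTE.
Qed.
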